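(* Let $k$ be an odd positive integer. Then $$\sum_{n=1}^{k}\frac{1}{\cos^4(2\pi n/k)}=\sum_{n=1}^{k}\frac{1}{\cos^4(\pi n/k)}=\frac{k^2(k^2+2)}{3}.$$ *)

(* Defs.v *)
From Stdlib Require Export Reals.
Open Scope R_scope.

(* sum_{n=1}^{k} f n, for k >= 1 *)
Definition sum1 (f : nat -> R) (k : nat) : R :=
  sum_f_R0 (fun i => f (S i)) (Nat.pred k).

(* Main.v *)
Require Import Defs.
From Stdlib Require Import Reals Arith ZArith Lia Lra.
Open Scope R_scope.

Fixpoint sm (f : nat -> R) (n : nat) : R :=
  match n with O => 0 | S n => sm f n + f n end.

Lemma sm_ext f g n : (forall i, (i < n)%nat -> f i = g i) -> sm f n = sm g n.
Proof. induction n; intros H; simpl; auto. rewrite IHn by (intros; apply H; lia). rewrite H by lia. auto. Qed.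

Lemma sm_plus f g n : sm f n + sm g n = sm (fun i => f i + g i) n.
Proof. induction n; simpl; [ring|]. rewrite <- IHn. ring. Qed.

Lemma sm_scal c f n : c * sm f n = sm (fun i => c * f i) n.
Proof. induction n; simpl; [ring|]. rewrite <- IHn. ring. Qed.

Lemma sm_split f a b : sm f (a + b) = sm f a + sm (fun i => f (a + i)%nat) b.
Proof. induction b; simpl. rewrite Nat.add_0_r; ring. rewrite Nat.add_succ_r. simpl. rewrite IHb. ring. Qed.

Lemma sm_tele g n : sm (fun i => g (S i) - g i) n = g n - g O.
Proof. induction n; simpl. ring. rewrite IHn. ring. Qed.

Lemma sm_const c n : sm (fun _ => c) n = INR n * c.
Proof. induction n; simpl sm. simpl; ring. rewrite IHn, S_INR. ring. Qed.

Lemma sum_f_R0_sm f n : sum_f_R0 f n = sm f (S n).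
Proof. induction n; simpl. ring. rewrite IHn. simpl. ring. Qed.

Lemma sum1_sm f k : (1 <= k)%nat -> sum1 f k = sm (fun i => f (S i)) k.
Proof. intros H. unfold sum1. rewrite sum_f_R0_sm. f_equal. lia. Qed.

Lemma cos_al_nz k q n : k = (2*q+1)%nat -> cos (PI * INR n / INR k) <> 0.
Proof.
  intros Hq Hc. apply cos_eq_0_0 in Hc as [z Hz].
  assert (HK : INR k <> 0) by (rewrite Hq; apply not_0_INR; lia).
  assert (H2 : 2 * INR n = (2 * IZR z + 1) * INR k).
  { assert (HP := PI_RGT_0).
    apply Rmult_eq_reg_l with (PI / INR k). 2:{ apply Rgt_not_eq. unfold Rdiv. apply Rmult_gt_0_compat; auto. apply Rinv_0_lt_compat. rewrite Hq; apply lt_0_INR; lia. }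
    replace (PI / INR k * (2 * INR n)) with (2 * (PI * INR n / INR k)) by (field; auto).
    rewrite Hz. field. auto. }
  rewrite !INR_IZR_INZ in H2.
  change 2 with (IZR 2) in H2. change 1 with (IZR 1) in H2. rewrite <- !mult_IZR, <- plus_IZR, <- mult_IZR in H2.
  apply eq_IZR in H2. rewrite Hq in H2. rewrite Nat2Z.inj_add, Nat2Z.inj_mul in H2. 
  assert (E : (2*Z.of_nat n = 2*(z*(2*Z.of_nat q+1) + Z.of_nat q) + 1)%Z) by (rewrite H2; ring). lia.
Qed.


Definition al (k n : nat) : R := PI * INR n / INR k.
Definition E (k m j : nat) : R :=
  sm (fun i => cos ((2 * INR j - INR m) * al k (S i)) / (cos (al k (S i))) ^ m) k.

Lemma E_rec k q m j : k = (2*q+1)%nat -> E k (S m) j + E k (S m) (S j) = 2 * E k m j.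
Proof.
  intros Hq. unfold E. rewrite sm_plus, sm_scal. apply sm_ext. intros i _.
  set (a := al k (S i)). assert (Hc : cos a <> 0) by (apply (cos_al_nz k q); auto).
  set (y := (2 * INR j - INR m) * a).
  rewrite !S_INR.
  replace ((2 * INR j - (INR m + 1)) * a) with (y - a) by (unfold y; ring).
  replace ((2 * (INR j + 1) - (INR m + 1)) * a) with (y + a) by (unfold y; ring).
  rewrite cos_minus, cos_plus. simpl pow.
  assert (cos a ^ m <> 0) by (apply pow_nonzero; auto).
  field. auto.
Qed.

Lemma E_per k q m : k = (2*q+1)%nat -> E k m (S k) = E k m 1.
Proof.
  intros Hq. unfold E. apply sm_ext. intros i _. f_equal.
  assert (HK : INR k <> 0) by (rewrite Hq; apply not_0_INR; lia).
  unfold al. symmetry. rewrite <- (cos_period _ (S i)). f_equal. rewrite !S_INR. simpl INR. field. auto.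
Qed.

Lemma E0_k k q : k = (2*q+1)%nat -> E k 0 k = INR k.
Proof.
  intros Hq. unfold E.
  assert (HK : INR k <> 0) by (rewrite Hq; apply not_0_INR; lia).
  transitivity (sm (fun _ => 1) k). 2:{ rewrite sm_const; ring. } apply sm_ext. intros i _.
  unfold al. simpl pow. replace ((2 * INR k - INR 0) * (PI * INR (S i) / INR k)) with (0 + 2 * INR (S i) * PI).
  rewrite cos_period, cos_0. field. simpl INR. field. auto.
Qed.

Lemma E0_lt k q s : k = (2*q+1)%nat -> (1 <= s)%nat -> (s < k)%nat -> E k 0 s = 0.
Proof.
  intros Hq H1 H2. unfold E.
  assert (HK : 0 < INR k) by (rewrite Hq; apply lt_0_INR; lia).
  set (x := 2 * PI * INR s / INR k).
  assert (Hs : 0 < sin (x/2)).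
  { assert (0 < INR s) by (apply lt_0_INR; lia). apply lt_INR in H2.
    assert (HP := PI_RGT_0).
    replace (x / 2) with (PI * (INR s / INR k)) by (unfold x; field; lra).
    assert (INR s / INR k < 1). { apply (Rmult_lt_reg_r (INR k)); auto. field_simplify; lra. }
    assert (0 < INR s / INR k). { apply Rdiv_lt_0_compat; lra. }
    apply sin_gt_0; nra.
    }
  apply Rmult_eq_reg_l with (2 * sin (x/2)); [|lra].
  rewrite Rmult_0_r, sm_scal.
  transitivity (sm (fun i => (fun n => sin ((INR n + /2) * x)) (S i) - (fun n => sin ((INR n + /2) * x)) i) k).
  { apply sm_ext. intros i _. simpl pow. rewrite S_INR.
    replace ((INR i + 1 + / 2) * x) with ((INR i + 1) * x + x/2) by field.
    replace ((INR i + / 2) * x) with ((INR i + 1) * x - x/2) by field.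
    rewrite sin_plus, sin_minus. unfold al. rewrite S_INR. simpl INR.
    replace ((2 * INR s - 0) * (PI * (INR i + 1) / INR k)) with ((INR i + 1) * x) by (unfold x; field; lra).
    field. }
  rewrite (sm_tele (fun n => sin ((INR n + /2) * x))). simpl INR.
  replace ((INR k + /2) * x) with (x/2 + 2 * INR s * PI) by (unfold x; field; lra).
  rewrite sin_period. replace ((0 + /2) * x) with (x/2) by field. ring.
Qed.

Lemma uniq k q (F e : nat -> R) : k = (2*q+1)%nat ->
  (forall s, (1 <= s)%nat -> (s < k)%nat -> F s + F (S s) = e s + e (S s)) ->
  F k + F 1%nat = e k + e 1%nat ->
  forall s, (1 <= s <= k)%nat -> F s = e s.
Proof.
  intros Hq Hr Hb.
  set (D := fun s => F s - e s).
  assert (HD : forall i, (i < k)%nat -> D (S i) = (-1)^i * D 1%nat).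
  { induction i; intros Hi. simpl; ring.
    assert (D (S i) + D (S (S i)) = 0) by (unfold D; specialize (Hr (S i) ltac:(lia) ltac:(lia)); lra).
    rewrite IHi in H by lia. simpl pow. lra. }
  assert (Hk : D k = D 1%nat).
  { replace k with (S (2*q)) at 1 by lia. rewrite HD by lia. rewrite pow_1_even. ring. }
  assert (H1 : D 1%nat = 0) by (unfold D in *; lra).
  intros s Hs. destruct s. lia. specialize (HD s). rewrite H1, Rmult_0_r in HD.
  unfold D in HD. specialize (HD ltac:(lia)). lra.
Qed.

Definition P1 (K x : R) := - K.
Definition P2 (K x : R) := 2 * K * x - K * (K + 2).
Definition P3 (K x : R) := - 2 * K * x^2 + 2 * K * (K + 3) * x - (3 * K^2 + 4 * K).
Definition P4 (K x : R) := 16 * (K / 24 * (x - 1) * x * (2 * x - 1) - K * (K + 3) / 8 * x * (x - 1)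
   + (3 * K^2 + 4 * K) / 8 * (x - 1) + (K^4 - 4 * K^2) / 48).

Definition ev (P : R -> R -> R) (k s : nat) : R := (-1)^s * P (INR k) (INR s).

Lemma step_gen (k m q : nat) (P Pm : R -> R -> R) : k = (2*q+1)%nat ->
  (forall x, P (INR k) x - P (INR k) (x + 1) = 2 * Pm (INR k) x) ->
  P (INR k) (INR k) + P (INR k) 1 = 2 * Pm (INR k) (INR k) ->
  (forall s, (1 <= s <= k)%nat -> E k m s = ev Pm k s) ->
  forall s, (1 <= s <= k)%nat -> E k (S m) s = ev P k s.
Proof.
  intros Hq Hd Hbd IH. apply (uniq k q); auto.
  - intros s H1 H2. rewrite E_rec with (q := q) by auto. rewrite IH by lia.
    unfold ev. rewrite S_INR. simpl pow. replace (2 * ((-1) ^ s * Pm (INR k) (INR s))) with ((-1)^s * (2 * Pm (INR k) (INR s))) by ring. rewrite <- Hd. ring.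
  - rewrite <- (E_per k q) by auto. rewrite E_rec with (q := q) by auto. rewrite IH by lia.
    unfold ev. assert (Hm : (-1)^k = -1) by (replace k with (S (2*q)) by lia; rewrite <- tech_pow_Rmult, pow_1_even; ring).
    rewrite Hm.
    replace (INR 1) with 1 by reflexivity. replace (2 * (-1 * Pm (INR k) (INR k))) with (-(2 * Pm (INR k) (INR k))) by ring. rewrite <- Hbd. simpl pow. ring.
Qed.

Lemma E1 k q : k = (2*q+1)%nat -> forall s, (1 <= s <= k)%nat -> E k 1 s = ev P1 k s.
Proof.
  intros Hq. apply (uniq k q); auto.
  - intros s H1 H2. rewrite E_rec with (q := q) by auto. rewrite (E0_lt k q) by auto.
    unfold ev, P1. simpl pow. ring.
  - rewrite <- (E_per k q) by auto. rewrite E_rec with (q := q) by auto. rewrite (E0_k k q) by auto.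
    unfold ev, P1. assert (Hm : (-1)^k = -1) by (replace k with (S (2*q)) by lia; rewrite <- tech_pow_Rmult, pow_1_even; ring).
    rewrite Hm. simpl pow. ring.
Qed.

Lemma E4 k q : k = (2*q+1)%nat -> forall s, (1 <= s <= k)%nat -> E k 4 s = ev P4 k s.
Proof.
  intros Hq.
  assert (H2 := step_gen k 1 q P2 P1 Hq ltac:(intros; unfold P1, P2; ring) ltac:(unfold P1, P2; ring) (E1 k q Hq)).
  assert (H3 := step_gen k 2 q P3 P2 Hq ltac:(intros; unfold P3, P2; ring) ltac:(unfold P3, P2; ring) H2).
  exact (step_gen k 3 q P4 P3 Hq ltac:(intros; unfold P4, P3; field) ltac:(unfold P4, P3; field) H3).
Qed.

Lemma partB (f : nat -> R) q :
  sm (fun i => f (S i)) (2*q+1) = sm (fun i => f (2 * S i)%nat) q + sm (fun i => f (2*i+1)%nat) (S q).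
Proof.
  induction q. simpl. ring.
  replace (2 * S q + 1)%nat with (S (S (2*q+1))) by lia.
  change (sm (fun i => f (S i)) (S (S (2*q+1)))) with (sm (fun i => f (S i)) (2*q+1) + f (S (2*q+1)) + f (S (S (2*q+1)))).
  rewrite IHq. change (sm (fun i => f (2 * S i)%nat) (S q)) with (sm (fun i => f (2 * S i)%nat) q + f (2 * S q)%nat).
  change (sm (fun i => f (2 * i + 1)%nat) (S (S q))) with (sm (fun i => f (2 * i + 1)%nat) (S q) + f (2 * S q + 1)%nat).
  replace (S (2*q+1)) with (2 * S q)%nat by lia. replace (S (2 * S q)) with (2 * S q + 1)%nat by lia. ring.
Qed.

Lemma partA (f : nat -> R) k q : k = (2*q+1)%nat -> (forall m, f (m + k)%nat = f m) ->
  sm (fun i => f (2 * S i)%nat) k = sm (fun i => f (2 * S i)%nat) q + sm (fun i => f (2*i+1)%nat) (S q).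
Proof.
  intros Hq Hp. replace k with (q + S q)%nat by lia. rewrite sm_split. f_equal.
  apply sm_ext. intros i _. rewrite <- (Hp (2*i+1)%nat). f_equal. lia.
Qed.

Theorem mainTheorem2 (k : nat) (Hk : Nat.Odd k) :
  sum1 (fun n => 1 / (cos (2 * PI * INR n / INR k)) ^ 4) k
    = sum1 (fun n => 1 / (cos (PI * INR n / INR k)) ^ 4) k
  /\ sum1 (fun n => 1 / (cos (PI * INR n / INR k)) ^ 4) k
    = (INR k) ^ 2 * ((INR k) ^ 2 + 2) / 3.
Proof.
  destruct Hk as [q Hq].
  assert (HK : INR k <> 0) by (rewrite Hq; apply not_0_INR; lia).
  set (f := fun n => 1 / (cos (PI * INR n / INR k)) ^ 4).
  split.
  - rewrite !sum1_sm by lia.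
    transitivity (sm (fun i => f (2 * S i)%nat) k).
    { apply sm_ext. intros i _. unfold f. rewrite mult_INR. simpl (INR 2). f_equal. f_equal. f_equal. field. auto. }
    rewrite (partA f k q Hq).
    2:{ intros m. unfold f. rewrite plus_INR.
        replace (PI * (INR m + INR k) / INR k) with (PI * INR m / INR k + PI) by (field; auto).
        rewrite neg_cos. f_equal. ring. }
    fold f. rewrite Hq, partB. reflexivity.
  - rewrite sum1_sm by lia.
    destruct q.
    + subst k. unfold f. simpl sm. simpl INR. replace (PI * 1 / 1) with (0 + PI) by field.
      rewrite neg_cos, cos_0. field.
    + transitivity (E k 4 2).
      { unfold E. apply sm_ext. intros i _. unfold al.
        replace (2 * INR 2 - INR 4) with 0 by (simpl; ring). rewrite Rmult_0_l, cos_0. reflexivity. }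
      rewrite (E4 k (S q) Hq) by lia. unfold ev, P4. simpl pow. simpl INR. field.
Qed.
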